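(* Let $l\ge 2$ and let $\Gamma$ be the $l$-lattice. Then the spectrum of its (signless) normalized Laplacian is given by: $0$, with multiplicity $l^2-2l+1$; $\frac{l}{2}$, with multiplicity $2(l-1)$; and $l$, with multiplicity $1$.
   Context: A hypergraph $\Gamma=(\mathcal{V},\mathcal{H})$ has a finite vertex set $\mathcal{V}$ and a set $\mathcal{H}$ of nonempty subsets of $\mathcal{V}$ (hyperedges). $\deg(v)$ is the number of hyperedges containing $v$, $D$ the diagonal degree matrix, $A$ the matrix with $A_{ii}=0$ and $A_{ij}=-\#\{h\in\mathcal{H}: v_i,v_j\in h\}$ for $i\ne j$, and the (signless) normalized Laplacian is $L=\mathrm{Id}-D^{-1}A$. For $l\in\mathbb{N}_{\ge 2}$, the $l$-lattice is the hypergraph with vertex set $\{v_{ab}: a,b\in\{1,\ldots,l\}\}$ ($l^2$ vertices arranged in an $l\times l$ grid) and $2l$ hyperedges, namely the rows $\{v_{a1},\ldots,v_{al}\}$ for $a=1,\ldots,l$ and the columns $\{v_{1b},\ldots,v_{lb}\}$ for $b=1,\ldots,l$. *)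

(* Defs.v *)
From HB Require Import structures.
From mathcomp Require Import all_boot all_order all_algebra.
Set Implicit Arguments. Unset Strict Implicit. Unset Printing Implicit Defensive.
Import Order.TTheory GRing.Theory Num.Theory.
Local Open Scope ring_scope.

(* A hypergraph on a finite vertex type V: a set H of (nonempty) subsets of V.
   Matrices are indexed by 'I_#|V| via the enumeration enum_val of V
   (the spectrum does not depend on this ordering). *)
Section Hypergraph.
Variables (R : fieldType) (V : finType) (H : {set {set V}}).

Definition hdeg (v : V) : nat := #|[set h in H | v \in h]|.

Definition hcommon (v w : V) : nat := #|[set h in H | (v \in h) && (w \in h)]|.

Definition hDeg : 'M[R]_#|V| :=
  \matrix_(i, j) if i == j then (hdeg (enum_val i))%:R else 0.

Definition hAdj : 'M[R]_#|V| :=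
  \matrix_(i, j) if i == j then 0 else - (hcommon (enum_val i) (enum_val j))%:R.

Definition hLaplacian : 'M[R]_#|V| := 1%:M - invmx hDeg *m hAdj.
End Hypergraph.

(* The l-lattice: vertices v_ab = (a, b) in 'I_l * 'I_l, hyperedges are the
   rows {v_a1..v_al} and the columns {v_1b..v_lb}. *)
Definition lattice_row (l : nat) (a : 'I_l) : {set 'I_l * 'I_l} :=
  [set v | v.1 == a].
Definition lattice_col (l : nat) (b : 'I_l) : {set 'I_l * 'I_l} :=
  [set v | v.2 == b].
Definition lattice_edges (l : nat) : {set {set 'I_l * 'I_l}} :=
  [set lattice_row a | a : 'I_l] :|: [set lattice_col b | b : 'I_l].

(* Main.v *)
Require Import Defs.
From HB Require Import structures.
From mathcomp Require Import all_boot all_order all_algebra.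
From mathcomp Require Import ring.
Set Implicit Arguments. Unset Strict Implicit. Unset Printing Implicit Defensive.
Import Order.TTheory GRing.Theory Num.Theory.
Local Open Scope ring_scope.

Lemma char_poly_sim (R : comNzRingType) n (P Pi D : 'M[R]_n) :
  P *m Pi = 1%:M -> char_poly (P *m D *m Pi) = char_poly D.
Proof.
move=> PPi; rewrite /char_poly /char_poly_mx.
have -> : 'X%:M - map_mx polyC (P *m D *m Pi) =
   map_mx polyC P *m ('X%:M - map_mx polyC D) *m map_mx polyC Pi.
  rewrite mulmxBr mulmxBl !map_mxM scalar_mxC; congr (_ - _).
  by rewrite -mulmxA -map_mxM PPi map_mx1 mulmx1.
rewrite !det_mulmx mulrC mulrA -det_mulmx -map_mxM mulmx1C // map_mx1 det1 mul1r.
by []. Qed.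

Section Lat.
Variables (R : realFieldType) (k : nat).
Local Notation l := k.+2.
Local Notation T := ('I_l * 'I_l)%type.
Local Notation n := #|(T : finType)|.
Local Notation e := (@enum_val T (pred_of_argType T)).

Lemma row_neq_col (a b : 'I_l) : lattice_row a != lattice_col b.
Proof.
apply/eqP => E.
have h0 : (a, inord 0) \in lattice_col b by rewrite -E inE.
have h1 : (a, inord 1) \in lattice_col b by rewrite -E inE.
rewrite !inE /= in h0 h1.
have := congr1 val (etrans (eqP h0) (esym (eqP h1))).
rewrite /= !inordK //.
Qed.

Lemma hcommonE (v w : T) :
  hcommon (lattice_edges l) v w = ((v.1 == w.1) + (v.2 == w.2))%N.
Proof.
rewrite /hcommon.
have -> : [set h in lattice_edges l | (v \in h) && (w \in h)] =
   (if v.1 == w.1 then [set lattice_row v.1] else set0) :|: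
   (if v.2 == w.2 then [set lattice_col v.2] else set0).
  apply/setP => h; rewrite /lattice_edges !inE; apply/idP/idP.
    case/andP => /orP [/imsetP [a _ ->] | /imsetP [b _ ->]];
      rewrite !inE => /andP [/eqP hv /eqP hw]; subst.
      by rewrite hw eqxx inE eqxx.
    by rewrite hw eqxx [X in _ || X]inE eqxx orbT.
  case/orP.
  case: eqP => E; rewrite inE // => /eqP ->.
    by rewrite !inE E eqxx /= andbT; apply/orP; left; apply: imset_f.
  case: eqP => E; rewrite inE // => /eqP ->.
  by rewrite !inE E eqxx /= andbT; apply/orP; right; apply: imset_f.
rewrite cardsU.
have -> : (if v.1 == w.1 then [set lattice_row v.1] else set0) :&:
   (if v.2 == w.2 then [set lattice_col v.2] else set0) = set0.
  case: (v.1 == w.1); case: (v.2 == w.2); rewrite ?set0I ?setI0 //.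
  apply/setP => h; rewrite !inE; apply/negP => /andP [/eqP -> /eqP E].
  by move: (row_neq_col v.1 v.2); rewrite E eqxx.
by case: (v.1 == w.1); case: (v.2 == w.2); rewrite ?cards1 ?cards0.
Qed.


Lemma two_neq0 : (2 : R) != 0. Proof. by rewrite pnatr_eq0. Qed.
Lemma l_neq0 : (l%:R : R) != 0. Proof. by rewrite pnatr_eq0. Qed.

Definition Lm : 'M[R]_n := \matrix_(i, j)
  (2^-1 * (((e i).1 == (e j).1)%:R + ((e i).2 == (e j).2)%:R)).

Lemma LE : hLaplacian R (lattice_edges l) = Lm.
Proof.
have HD : hDeg R (lattice_edges l) = 2%:M.
  apply/matrixP => i j; rewrite !mxE.
  have -> : hdeg (lattice_edges l) (e i) = hcommon (lattice_edges l) (e i) (e i).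
    by rewrite /hdeg /hcommon; apply: eq_card => h; rewrite !inE andbb.
  by rewrite hcommonE !eqxx; case: (i == j).
rewrite /hLaplacian HD invmx_scalar mul_scalar_mx.
apply/matrixP => i j; rewrite !mxE hcommonE.
case: eqP => [->|/eqP ij].
  by rewrite !eqxx mulr0 subr0 /=; field.
by rewrite sub0r -mulrN opprK natrD.
Qed.


Definition q (x y : 'I_l) : R :=
  if y == ord0 then 1 else (x == ord0)%:R - (x == y)%:R.
Definition r (y x : 'I_l) : R := l%:R^-1 - ((y != ord0) && (x == y))%:R.
Definition lam (y : 'I_l) : R := if y == ord0 then l%:R else 0.

Lemma sum_delta (F : 'I_l -> R) c : \sum_x (x == c)%:R * F x = F c.
Proof.
rewrite (bigD1 c) //= eqxx mul1r big1 ?addr0 // => x /negbTE ->.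
by rewrite mul0r.
Qed.

Lemma sum_q x y : \sum_z q z y = q x y * lam y.
Proof.
rewrite /q /lam; case: eqP => _.
  by rewrite sumr_const card_ord mul1r.
rewrite mulr0 sumrB.
have H c : \sum_(z < l) (z == c)%:R = 1 :> R.
  by rewrite -[RHS](sum_delta (fun _ => 1) c); apply: eq_bigr => z _; rewrite mulr1.
by rewrite !H subrr.
Qed.

Lemma sum_rq y z : \sum_x r y x * q x z = (y == z)%:R.
Proof.
have -> : \sum_x r y x * q x z =
   l%:R^-1 * \sum_x q x z - (y != ord0)%:R * \sum_x (x == y)%:R * q x z.
  rewrite !mulr_sumr -sumrB; apply: eq_bigr => x _; rewrite /r.
  by case: (y != ord0); case: (x == y); rewrite /= ?mulr1n ?mulr0n; ring.
rewrite sum_delta (sum_q ord0) /q /lam.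
case: (eqVneq z ord0) => [->|zn0]; rewrite ?eqxx.
  rewrite mulr1 mul1r mulrC mulfV ?l_neq0 //.
  by case: (y == ord0); rewrite /= ?mulr1n ?mulr0n ?subr0 ?subrr.
rewrite mulr0 mulr0 sub0r.
case: (eqVneq y ord0) => [->|yn]; rewrite /= ?mulr0n ?mulr1n ?mul0r ?mul1r ?oppr0 ?sub0r ?opprK //.
by rewrite eq_sym (negbTE zn0).
Qed.

Lemma sumV (V : finType) (F : V -> R) : \sum_(i < #|V|) F (enum_val i) = \sum_(x : V) F x.
Proof. exact: (esym (big_enum_val _)). Qed.
Lemma prodV (V : finType) (F : V -> {poly R}) : \prod_(i < #|V|) F (enum_val i) = \prod_(x : V) F x.
Proof. exact: (esym (big_enum_val _)). Qed.

Lemma sumP (F : T -> R) : \sum_(x : T) F x = \sum_a \sum_b F (a, b).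
Proof.
rewrite pair_bigA /=.
by apply: eq_bigr => -[a b].
Qed.

Lemma prodP (F : T -> {poly R}) : \prod_(x : T) F x = \prod_a \prod_b F (a, b).
Proof.
rewrite pair_bigA /=.
by apply: eq_bigr => -[a b].
Qed.

Definition Pm : 'M[R]_n := \matrix_(i, j) (q (e i).1 (e j).1 * q (e i).2 (e j).2).
Definition Pi : 'M[R]_n := \matrix_(i, j) (r (e i).1 (e j).1 * r (e i).2 (e j).2).
Definition dv : 'rV[R]_n := \row_j (2^-1 * (lam (e j).1 + lam (e j).2)).

Lemma PiP : Pi *m Pm = 1%:M.
Proof.
apply/matrixP => i j; rewrite !mxE.
pose G := fun t : T => r (e i).1 t.1 * r (e i).2 t.2 *
   (q t.1 (e j).1 * q t.2 (e j).2).
rewrite (eq_bigr (fun kk => G (e kk))); last by move=> kk _; rewrite !mxE.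
rewrite sumV sumP /G /=.
rewrite (eq_bigr (fun a => r (e i).1 a * q a (e j).1 *
   \sum_b r (e i).2 b * q b (e j).2)); last first.
  by move=> a _; rewrite mulr_sumr; apply: eq_bigr => b _; ring.
rewrite -mulr_suml !sum_rq -natrM mulnb.
by rewrite -(inj_eq enum_val_inj); case: (e i) => ? ?; case: (e j).
Qed.

Lemma LP : Lm *m Pm = Pm *m diag_mx dv.
Proof.
apply/matrixP => i j; rewrite mul_mx_diag !mxE.
pose G := fun t : T => 2^-1 * (((e i).1 == t.1)%:R + ((e i).2 == t.2)%:R) *
   (q t.1 (e j).1 * q t.2 (e j).2).
rewrite (eq_bigr (fun kk => G (e kk))); last by move=> kk _; rewrite !mxE.
rewrite sumV sumP /G /=.
rewrite (eq_bigr (fun a => 2^-1 * (((e i).1 == a)%:R * q a (e j).1) * \sum_b q b (e j).2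
   + 2^-1 * q a (e j).1 * \sum_b (((e i).2 == b)%:R * q b (e j).2))); last first.
  move=> a _; rewrite !mulr_sumr -big_split; apply: eq_bigr => b _ /=; ring.
rewrite big_split /= -!mulr_suml.
rewrite (eq_bigr (fun a => 2^-1 * (((a == (e i).1)%:R * q a (e j).1)))); last first.
  by move=> a _; rewrite eq_sym.
rewrite -mulr_sumr sum_delta (sum_q (e i).2).
rewrite -mulr_sumr (sum_q (e i).1).
rewrite (eq_bigr (fun b => ((b == (e i).2)%:R * q b (e j).2))); last first.
  by move=> b _; rewrite eq_sym.
rewrite sum_delta; ring.
Qed.


Lemma lam0 : lam ord0 = l%:R. Proof. by rewrite /lam eqxx. Qed.
Lemma lamS (x : 'I_k.+1) : lam (lift ord0 x) = 0.
Proof. by rewrite /lam eq_sym (negbTE (neq_lift _ _)). Qed.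

Lemma charL : char_poly (hLaplacian R (lattice_edges l)) =
  \prod_a \prod_b ('X - (2^-1 * (lam a + lam b))%:P).
Proof.
have PPi : Pm *m Pi = 1%:M by apply: mulmx1C; exact: PiP.
have -> : hLaplacian R (lattice_edges l) = Pm *m diag_mx dv *m Pi.
  by rewrite LE -LP -mulmxA PPi mulmx1.
rewrite char_poly_sim // char_poly_trig ?diag_mx_is_trig //.
pose G := fun t : T => 'X - (2^-1 * (lam t.1 + lam t.2))%:P.
rewrite (eq_bigr (fun kk => G (e kk))); last by move=> kk _; rewrite !mxE eqxx mulr1n.
by rewrite prodV prodP.
Qed.

End Lat.

From mathcomp Require Import zify.

Theorem mainTheorem9 (R : realFieldType) (l : nat) (hl : (2 <= l)%N) :
  char_poly (hLaplacian R (lattice_edges l)) =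
    ('X - 0%:P) ^+ (l * l - 2 * l + 1)
    * ('X - (l%:R / 2 : R)%:P) ^+ (2 * (l - 1))
    * ('X - (l%:R : R)%:P) ^+ 1.
Proof.
case: l hl => [|[|k]] // _.
set L : R := (k.+2)%:R.
rewrite charL big_ord_recl.
have h2 : (2 : R) != 0 by rewrite pnatr_eq0.
have E1 : \prod_(b < k.+2) ('X - (2^-1 * (@lam R k ord0 + @lam R k b))%:P) =
   ('X - L%:P) * ('X - (L / 2)%:P) ^+ k.+1.
  rewrite big_ord_recl lam0.
  rewrite (eq_bigr (fun _ => 'X - (L / 2)%:P)); last first.
    by move=> b _; rewrite lamS addr0 mulrC.
  rewrite prodr_const card_ord; congr (_ * _); congr ('X - _%:P).
  by rewrite /L; field.
have E2 : \prod_(a < k.+1) \prod_(b < k.+2)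
    ('X - (2^-1 * (@lam R k (lift ord0 a) + @lam R k b))%:P) =
    (('X - (L / 2)%:P) * 'X ^+ k.+1) ^+ k.+1.
  transitivity (\prod_(a < k.+1) (('X - (L / 2)%:P) * 'X ^+ k.+1)); last first.
    by rewrite prodr_const card_ord.
  apply: eq_bigr => a _.
  rewrite big_ord_recl lamS lam0 add0r; congr (_ * _); first by rewrite mulrC.
  rewrite (eq_bigr (fun _ => 'X)); last first.
    by move=> b _; rewrite !lamS addr0 mulr0 subr0.
  by rewrite prodr_const card_ord.
rewrite E1 E2 subr0.
have -> : (k.+2 * k.+2 - 2 * k.+2 + 1 = k.+1 * k.+1)%N by lia.
have -> : (2 * (k.+2 - 1) = k.+1 + k.+1)%N by lia.
rewrite exprD exprMn expr1 -exprM.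
move: ('X - (L / 2)%:P) ('X - L%:P) => A B.
move: (A ^+ k.+1) ('X ^+ (k.+1 * k.+1) : {poly R}) => C D.
ring.
Qed.
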